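(* Let $n\ge1$ and let $\alpha=(a_n,\ldots,a_1)$ be a restricted sequence. Write $e'_\alpha=\sum_{\beta}P_\beta\, e_\beta$ with $P_\beta\in\mathbb{Q}(q)$, the sum over restricted sequences $\beta$ of length $n$. Then $P_\beta\neq0$ if and only if $\beta\preccurlyeq\alpha$.
   Context: $D_n$: non-crossing perfect matchings of $\{1,\ldots,2n\}$ (non-crossing $n$-chord diagrams), $D_0=\{\phi\}$. For $1\le k\le 2n+1$, $l_k:D_n\to D_{n+1}$: $l_k(\alpha)$ matches $k$ with $k+1$, old point $i$ becomes $i$ if $i<k$ and $i+2$ if $i\ge k$. Restricted sequence of $\alpha\in D_n$: let $k_n$ be the smallest $k$ with $k$ matched to $k+1$; it is $(k_n,k_{n-1},\ldots,k_1)$ with $(k_{n-1},\ldots,k_1)$ the restricted sequence of $\alpha$ with that arc removed (empty for $\phi$). This is a bijection from $D_n$ to restricted sequences of length $n$; $e_{(a_n,\ldots,a_1)}$ denotes the corresponding diagram. $\preccurlyeq$ is the coordinatewise order on restricted sequences: $(b_n,\ldots,b_1)\preccurlyeq(a_n,\ldots,a_1)$ iff $b_i\le a_i$ for all $i$. $V_n$: $\mathbb{Q}(q)$-vector space with basis $D_n$, $l_k$ extended linearly. $\Delta_{-1}=0$, $\Delta_0=1$, $\Delta_k=q\Delta_{k-1}-\Delta_{k-2}$. $e'$: $e'_{(1)}=e_{(1)}$; for $n\ge2$, $e'_{(a_n,\ldots,a_1)}=l_{a_n}(e'_{(a_{n-1},\ldots,a_1)})-\frac{\Delta_{a_n-2}}{\Delta_{a_n-1}}e'_{(a_n-1,a_{n-1},\ldots,a_1)}$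 if $a_n\ge2$, and $e'_{(1,a_{n-1},\ldots,a_1)}=l_1(e'_{(a_{n-1},\ldots,a_1)})$. *)

(* Defs.v *)
From HB Require Import structures.
From mathcomp Require Import all_boot all_order all_algebra fraction.
Set Implicit Arguments. Unset Strict Implicit. Unset Printing Implicit Defensive.
Import Order.TTheory GRing.Theory Num.Theory.

Definition Qq : fieldType := {fraction {poly rat}}.

(* Chord diagrams on points 1..2n are encoded by their "partner word":
   a sequence s of length 2n whose (i-1)-th entry is the point matched to i. *)
Definition partner (s : seq nat) (i : nat) : nat := nth 0%N s i.-1.

Definition is_matching (n : nat) (s : seq nat) : bool :=
  (size s == 2 * n)%N &&
  all (fun i => [&& (0 < partner s i <= 2 * n)%N, partner s i != i
                  & partner s (partner s i) == i]) (iota 1 (2 * n)).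

Definition noncrossing (n : nat) (s : seq nat) : bool :=
  all (fun i => all (fun j => ~~ [&& (i < j)%N, (j < partner s i)%N & (partner s i < partner s j)%N])
                    (iota 1 (2 * n))) (iota 1 (2 * n)).

Definition is_diagram (n : nat) (s : seq nat) : bool :=
  is_matching n s && noncrossing n s.

(* l_k on diagrams: k is matched with k+1, old point i becomes i if i < k and
   i + 2 if i >= k. *)
Definition shiftk (k p : nat) : nat := if (p < k)%N then p else (p + 2)%N.
Definition lk (k : nat) (s : seq nat) : seq nat :=
  let t := map (shiftk k) s in take k.-1 t ++ [:: k.+1; k] ++ drop k.-1 t.

Definition unshiftk (k p : nat) : nat := if (p < k)%N then p else (p - 2)%N.
Definition remove_arc (k : nat) (s : seq nat) : seq nat :=
  map (unshiftk k) (take k.-1 s ++ drop k.+1 s).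

(* smallest k such that k is matched with k+1 *)
Definition first_adj (s : seq nat) : nat :=
  (find (fun i => nth 0%N s i == i.+2) (iota 0 (size s))).+1.

(* restricted sequence (k_n, ..., k_1) of a diagram in D_n (list head = k_n) *)
Fixpoint rseq_aux (fuel : nat) (s : seq nat) : seq nat :=
  match fuel with
  | 0 => [::]
  | f.+1 => let k := first_adj s in k :: rseq_aux f (remove_arc k s)
  end.
Definition rseq (s : seq nat) : seq nat := rseq_aux (size s)./2 s.

Fixpoint restricted (a : seq nat) : bool :=
  match a with
  | [::] => true
  | [:: x] => x == 1%N
  | x :: ((y :: _) as r) => (0 < x <= y.+1)%N && restricted r
  end.

Definition rs_le (b a : seq nat) : bool := all2 (fun x y => (x <= y)%N) b a.

(* Elements of V_n: formal Q(q)-linear combinations of diagrams. *)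
Definition vec := seq (Qq * seq nat).
Definition vscale (c : Qq) (v : vec) : vec := map (fun t => (c * t.1, t.2)%R) v.
Definition vsub (v w : vec) : vec := v ++ vscale (-1)%R w.
Definition vl (k : nat) (v : vec) : vec := map (fun t => (t.1, lk k t.2)) v.
Definition coeff (v : vec) (d : seq nat) : Qq :=
  (\sum_(t <- v | t.2 == d) t.1)%R.

Fixpoint Delta (k : nat) : {poly rat} :=
  match k with
  | 0 => 1%R
  | 1 => 'X
  | (j.+1 as k1).+1 => ('X * Delta k1 - Delta j)%R
  end.

Definition ratD (a : nat) : Qq := (tofrac (Delta (a - 2)) / tofrac (Delta (a - 1)))%R.

(* e'_alpha, alpha = [:: a_n; ...; a_1].  e'_{()} = phi, so e'_{(1)} = l_1 phi
   = e_{(1)}. *)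
Fixpoint eprime (a : seq nat) : vec :=
  match a with
  | [::] => [:: (1%R, [::])]
  | x :: r =>
      let E := eprime r in
      (fix g (m : nat) : vec :=
         match m with
         | 0 => [::]
         | 1 => vl 1 E
         | (m'.+1) as m1 => vsub (vl m1 E) (vscale (ratD m1) (g m'))
         end) x
  end.

Example lk_ex : lk 1 [::] = [:: 2; 1]%N. Proof. reflexivity. Qed.
Example rseq_ex : rseq [:: 4; 3; 2; 1]%N = [:: 2; 1]%N. Proof. reflexivity. Qed.
Example rseq_ex2 : rseq [:: 2; 1; 4; 3]%N = [:: 1; 1]%N. Proof. reflexivity. Qed.
Example lk_ex2 : lk 2 [:: 2; 1]%N = [:: 4; 3; 2; 1]%N. Proof. reflexivity. Qed.
Example diag_ex : is_diagram 2 [:: 4; 3; 2; 1]%N && ~~ is_diagram 2 [:: 3; 4; 1; 2]%N.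
Proof. by vm_compute. Qed.

(* Main.v *)
Require Import Defs.
From HB Require Import structures.
From mathcomp Require Import all_boot all_order all_algebra fraction.
From mathcomp Require Import zify ring lra.
Set Implicit Arguments. Unset Strict Implicit. Unset Printing Implicit Defensive.

Ltac splitif := repeat (match goal with
 | |- context[if ?b then _ else _] =>
    lazymatch b with context[if _ then _ else _] => fail | _ =>
      case: (boolP b) => ?; cbv beta iota end
 end).

Lemma nth_map0 (f : nat -> nat) (s : seq nat) i : f 0 = 0 ->
  nth 0 (map f s) i = f (nth 0 s i).
Proof.
move=> f0; case: (ltnP i (size s)) => h; first by rewrite (nth_map 0).
by rewrite !nth_default ?size_map.
Qed.

Lemma size_lk k s : size (lk k s) = (size s).+2.
Proof.
rewrite /lk !size_cat /= size_take size_drop size_map. case: ltnP => ?; lia.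
Qed.

Lemma nth_lk k s i : 0 < k -> k.-1 <= size s ->
  nth 0 (lk k s) i = if i < k.-1 then shiftk k (nth 0 s i)
                     else if i == k.-1 then k.+1 else if i == k then k
                     else shiftk k (nth 0 s (i - 2)).
Proof.
move=> k0 hk; rewrite /lk nth_cat size_take size_map.
have -> : (if k.-1 < size s then k.-1 else size s) = k.-1 by case: ltnP; lia.
have sh0 : shiftk k 0 = 0 by rewrite /shiftk k0.
case: ltnP => h1.
  by rewrite nth_take // nth_map0.
case: eqP => h2; first by rewrite h2 subnn.
case: eqP => h3; first by have -> : i - k.-1 = 1 by lia.
have -> : i - k.-1 = (i - k.-1 - 2).+2 by lia.
rewrite /= nth_drop nth_map0 //; congr (shiftk k (nth 0 s _)); lia.
Qed.

Lemma size_rem k x : 0 < k -> k.+1 <= size x -> size (remove_arc k x) = size x - 2.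
Proof.
move=> k0 h; rewrite /remove_arc size_map size_cat size_take size_drop.
case: ltnP => ?; lia.
Qed.

Lemma nth_rem k x i : 0 < k -> k.-1 <= size x ->
  nth 0 (remove_arc k x) i = if i < k.-1 then unshiftk k (nth 0 x i)
                             else unshiftk k (nth 0 x i.+2).
Proof.
move=> k0 hk; rewrite /remove_arc nth_map0; last by rewrite /unshiftk k0.
rewrite nth_cat size_take.
have -> : (if k.-1 < size x then k.-1 else size x) = k.-1 by case: ltnP; lia.
case: ltnP => h1; first by rewrite nth_take.
rewrite nth_drop; congr (unshiftk k (nth 0 x _)); lia.
Qed.

Lemma rem_lk k s : 0 < k -> k <= (size s).+1 -> remove_arc k (lk k s) = s.
Proof.
move=> k0 hk.
have hs : size (remove_arc k (lk k s)) = size s.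
  rewrite size_rem ?size_lk //; lia.
apply: (@eq_from_nth _ 0) => // i; rewrite hs => hi.
rewrite nth_rem ?size_lk; try lia.
rewrite !nth_lk //; try lia.
have -> : i.+2 - 2 = i by lia.
rewrite /shiftk /unshiftk; splitif; lia.
Qed.

Lemma fa_before s i : i < (first_adj s).-1 -> nth 0 s i != i.+2.
Proof.
rewrite /first_adj /= => h.
have hs : i < size s.
  by apply: (leq_trans h); rewrite -[X in _ <= X](size_iota 0) find_size.
by have := before_find 0 h; rewrite nth_iota // add0n => ->.
Qed.

Lemma fa_found s : first_adj s <= size s -> nth 0 s (first_adj s).-1 = (first_adj s).+1.
Proof.
rewrite /first_adj /= => h.
have hh : has (fun i => nth 0 s i == i.+2) (iota 0 (size s)).
  by rewrite has_find size_iota.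
by have := nth_find 0 hh; rewrite nth_iota ?add0n // => /eqP.
Qed.

Lemma fa_char s i : i < size s -> nth 0 s i = i.+2 ->
  (forall j, j < i -> nth 0 s j != j.+2) -> first_adj s = i.+1.
Proof.
move=> hi hn hb; rewrite /first_adj; congr _.+1.
set P := (fun i => nth 0 s i == i.+2).
have hP : P i by rewrite /P hn.
case: (ltngtP (find P (iota 0 (size s))) i) => // h.
- have hh : has P (iota 0 (size s)).
    by rewrite has_find size_iota; apply: ltn_trans hi.
  have := nth_find 0 hh; rewrite nth_iota ?add0n; last first.
    by apply: ltn_trans hi.
  by rewrite /P (negbTE (hb _ h)).
- have := before_find 0 h; rewrite nth_iota ?add0n //.
  by rewrite hP.
Qed.

Lemma fa_pos s : 0 < first_adj s.
Proof. by []. Qed.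

Lemma fa_le s : first_adj s <= (size s).+1.
Proof. by rewrite /first_adj ltnS -[X in _ <= X](size_iota 0) find_size. Qed.

Lemma fa_lk1 j s : 0 < j -> j <= (size s).+1 -> j <= (first_adj s).+1 ->
  first_adj (lk j s) = j.
Proof.
move=> j0 hj hf.
have -> : j = j.-1.+1 by lia.
apply: fa_char.
- rewrite size_lk; lia.
- rewrite nth_lk //; try lia. rewrite ltnn eqxx; lia.
- move=> i hi; rewrite nth_lk //; try lia.
  have hb : i < (first_adj s).-1 -> nth 0 s i <> i.+2 by move/fa_before/eqP.
  rewrite hi /shiftk; splitif; lia.
Qed.

Lemma fa_lk2 j s : let k := first_adj s in
  nth 0 s k.-1 = k.+1 -> k.+2 <= j -> j <= (size s).+1 ->
  first_adj (lk j s) = k.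
Proof.
move=> k hk h1 h2.
have k0 : 0 < k by [].
have -> : k = k.-1.+1 by lia.
apply: fa_char.
- rewrite size_lk; lia.
- rewrite nth_lk //; try lia. rewrite hk /shiftk; splitif; lia.
- move=> i hi; rewrite nth_lk //; try lia.
  have hb : i < k.-1 -> nth 0 s i <> i.+2 by move/fa_before/eqP.
  rewrite /shiftk; splitif; lia.
Qed.

Definition adjk (k : nat) (s : seq nat) : Prop :=
  [/\ 0 < k, k < size s, nth 0 s k.-1 = k.+1, nth 0 s k = k &
      forall x, x <> k.-1 -> x <> k -> nth 0 s x <> k /\ nth 0 s x <> k.+1].

Lemma adj_fact k s : adjk k s -> forall x,
  (x = k.-1 /\ nth 0 s x = k.+1) \/ (x = k /\ nth 0 s x = k) \/
  (x <> k.-1 /\ x <> k /\ nth 0 s x <> k /\ nth 0 s x <> k.+1).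
Proof.
case=> k0 ks h1 h2 h3 x.
case: (eqVneq x k.-1) => [->|n1]; first by left.
case: (eqVneq x k) => [->|n2]; first by right; left.
right; right; have := h3 x (elimN eqP n1) (elimN eqP n2) => -[? ?].
split; first exact/eqP. split; first exact/eqP. by [].
Qed.

Ltac splitlia := repeat (match goal with
 | |- context[if ?b then _ else _] =>
    lazymatch b with context[if _ then _ else _] => fail | _ =>
      case: (boolP b) => ?; cbv beta iota; try (exfalso; lia) end
 end); lia.

Ltac decide_ifs := repeat (match goal with
 | |- context[if ?b then _ else _] =>
    lazymatch b with context[if _ then _ else _] => fail | context[nth] => fail | _ =>
      first [ have -> : b = true by lia | have -> : b = false by apply/negbTE; lia ] end
 end); cbv beta iota.

Lemma lk_rem k s : adjk k s -> lk k (remove_arc k s) = s.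
Proof.
move=> ha; have hf := adj_fact ha; case: ha => k0 ks h1 h2 h3.
have hs : size (lk k (remove_arc k s)) = size s.
  rewrite size_lk size_rem //; lia.
apply: (@eq_from_nth _ 0) => // i; rewrite hs => hi.
have hr : size (remove_arc k s) = size s - 2 by rewrite size_rem.
rewrite nth_lk ?hr; try lia.
rewrite !nth_rem //; try lia.
have E : nth 0 s (i - 2).+2 = if 2 <= i then nth 0 s i else nth 0 s 2.
  by case: ifP => ?; congr nth; lia.
have f1 := hf i. have f2 := hf (i - 2). have f3 := hf i.+2.
rewrite E; move: (nth 0 s i) (nth 0 s i.+2) (nth 0 s (i - 2)) (nth 0 s 2) f1 f2 f3.
move=> v1 v2 v3 v4 f1 f2 f3.
clear - k0 ks hi f1 f2 f3.
have : i < k.-1 \/ i = k.-1 \/ i = k \/ k < i by lia.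
rewrite /shiftk /unshiftk.
case=> [h|[h|[h|h]]]; decide_ifs.
- clear f2 f3; splitlia.
- clear f2 f3; splitlia.
- clear f2 f3; splitlia.
- clear f2 f3; splitlia.
Qed.


Lemma rem_comm k j s : adjk k s -> k.+2 <= j -> j <= (size s).+1 ->
  remove_arc k (lk j s) = lk (j - 2) (remove_arc k s).
Proof.
move=> ha hj1 hj2; have hf := adj_fact ha; case: ha => k0 ks h1 h2 h3.
have hs : size (remove_arc k (lk j s)) = size s.
  rewrite size_rem ?size_lk //; lia.
have hs2 : size (lk (j - 2) (remove_arc k s)) = size s.
  rewrite size_lk size_rem //; lia.
apply: (@eq_from_nth _ 0); first by rewrite hs hs2.
move=> i; rewrite hs => hi.
have hr : size (remove_arc k s) = size s - 2 by rewrite size_rem.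
have a1 : k.-1 <= size (lk j s) by rewrite size_lk; lia.
have a2 : (j-2).-1 <= size (remove_arc k s) by rewrite hr; lia.
have a3 : 0 < j - 2 by lia.
have a4 : k.-1 <= size s by lia.
have a5 : j.-1 <= size s by lia.
have a6 : 0 < j by lia.
rewrite (nth_rem _ k0 a1) (nth_lk _ a3 a2) !(nth_rem _ k0 a4) !(nth_lk _ a6 a5).
have -> : i.+2 - 2 = i by lia.
have E : nth 0 s (i - 2).+2 = if 2 <= i then nth 0 s i else nth 0 s 2.
  by case: ifP => ?; congr nth; lia.
have f1 := hf i. have f2 := hf (i - 2). have f3 := hf i.+2.
rewrite E. clear E hs hs2 hr h3 hf a1 a2 a3 a4 a5 a6 h1 h2.
move: f1 f2 f3.
have : i < k.-1 \/ (k.-1 <= i < j - 3) \/ i = j - 3 \/ i = j - 2 \/ j - 2 < i by lia.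
rewrite /shiftk /unshiftk.
case=> [h|[h|[h|[h|h]]]]; decide_ifs; move=> f1 f2 f3;
  move: (nth 0 s i) (nth 0 s i.+2) (nth 0 s (i - 2)) (nth 0 s 2) f1 f2 f3;
  move=> v1 v2 v3 v4 f1 f2 f3.
- clear f2 f3; splitlia.
- clear f1 f2; splitlia.
- clear f1 f2 f3; splitlia.
- clear f1 f2 f3; splitlia.
- clear f2 f3; splitlia.
Qed.

Lemma matchP n s : is_matching n s -> size s = 2 * n /\
  forall i, 0 < i <= 2 * n ->
   [/\ 0 < partner s i <= 2 * n, partner s i <> i & partner s (partner s i) = i].
Proof.
case/andP => /eqP hs /allP h; split => // i hi.
have := h i; rewrite mem_iota => /(_ ltac:(lia)) /and3P [h1 /eqP h2 /eqP h3].
by split.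
Qed.

Lemma match_adj n s k : is_matching n s -> 0 < k -> nth 0 s k.-1 = k.+1 -> adjk k s.
Proof.
move=> /matchP [hs hm] k0 hk.
have ks : k.-1 < size s.
  by case: ltnP => // h; move: hk; rewrite nth_default.
have [_ _ h3] := hm k ltac:(lia).
move: h3; rewrite /partner hk /= => h2.
have [h4 _ _] := hm k ltac:(lia).
move: h4; rewrite /partner hk => h4.
split => //; first (rewrite hs; lia).
- move=> x n1 n2.
  case: (ltnP x (size s)) => hx; last by rewrite nth_default //; lia.
  have [_ _ h5] := hm x.+1 ltac:(lia).
  move: h5; rewrite /partner /=.
  split => e; rewrite e in h5.
  + by move: h5; rewrite hk /= => e2; lia.
  + by move: h5; rewrite /= h2 => e2; lia.
Qed.

Lemma partner_lk k s a : 0 < k -> k.-1 <= size s -> 0 < a ->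
  partner (lk k s) (shiftk k a) = shiftk k (partner s a).
Proof.
move=> k0 hk a0; rewrite /partner nth_lk //.
case: (ltnP a k) => ha.
- have -> : shiftk k a = a by rewrite /shiftk ha.
  have -> : a.-1 < k.-1 by lia. by [].
- have -> : shiftk k a = a + 2 by rewrite /shiftk ltnNge ha.
  have -> : (a + 2).-1 < k.-1 = false by apply/negbTE; lia.
  have -> : ((a + 2).-1 == k.-1) = false by apply/negbTE; lia.
  have -> : ((a + 2).-1 == k) = false by apply/negbTE; lia.
  by congr (shiftk k (nth 0 s _)); lia.
Qed.

Lemma diag_lk_inv n k s : size s = 2 * n -> 0 < k <= (2 * n).+1 ->
  is_diagram n.+1 (lk k s) -> is_diagram n s.
Proof.
move=> hs hk /andP [hm hnc].
have [_ hmx] := matchP hm.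
have hk1 : k.-1 <= size s by lia.
have k0 : 0 < k by lia.
have PF a : 0 < a -> partner (lk k s) (shiftk k a) = shiftk k (partner s a) := partner_lk k0 hk1.
apply/andP; split.
  apply/andP; split; first by rewrite hs.
  apply/allP => a; rewrite mem_iota => ha.
  have [h1 h2 h3] := hmx (shiftk k a) ltac:(rewrite /shiftk; splitif; lia).
  rewrite PF in h1 h2 h3; try lia.
  have v0 : 0 < partner s a by move: h1; rewrite /shiftk; splitif; lia.
  rewrite PF // in h3.
  move: h1 h2 h3 v0; move: (partner s a) (partner s (partner s a)) => v w.
  rewrite /shiftk; splitif; lia.
apply/allP => a; rewrite mem_iota => ha.
apply/allP => b; rewrite mem_iota => hb.
move/allP: hnc => /(_ (shiftk k a)); rewrite mem_iota.
move=> /(_ ltac:(rewrite /shiftk; splitif; lia)) /allP /(_ (shiftk k b)).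
rewrite mem_iota => /(_ ltac:(rewrite /shiftk; splitif; lia)).
have [pa0 _ _] := hmx (shiftk k a) ltac:(rewrite /shiftk; splitif; lia).
rewrite !PF; try lia.
move: (partner s a) (partner s b) => pa pb.
rewrite /shiftk; splitif; lia.
Qed.

Lemma restricted_head x r : restricted (x :: r) -> x <= (size r).+1.
Proof.
elim: r x => [|y r IH] x /=; first by move/eqP ->.
case/andP => /andP [_ h1] h2; have := IH _ h2; lia.
Qed.

Lemma rseq_auxS n s :
  rseq_aux n.+1 s = first_adj s :: rseq_aux n (remove_arc (first_adj s) s).
Proof. by []. Qed.

Lemma diag_size n s : is_diagram n s -> size s = 2 * n.
Proof. by case/andP => /matchP []. Qed.

Lemma sumn_cons a l : sumn (a :: l) = a + sumn l.
Proof. by []. Qed.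

Lemma rseq_lk n : forall s r j, is_diagram n s -> restricted r -> size r = n ->
  rs_le (rseq_aux n s) r -> restricted (j :: r) ->
  rs_le (rseq_aux n.+1 (lk j s)) (j :: r) /\
  odd (sumn (rseq_aux n.+1 (lk j s))) = odd (j + sumn (rseq_aux n s)).
Proof.
elim: n => [|n IH] s r j hd hr hsr hle hjr.
  have hs := diag_size hd; case: s hs hd hle => // _ _ _.
  case: r hr hsr hjr => // _ _ /= /eqP ->.
  by rewrite /rs_le /=.
have hs := diag_size hd.
case: r hr hsr hle hjr => // x r' hr [hsr] hle hjr.
rewrite rseq_auxS /rs_le /= -/(rs_le _ _) in hle; case/andP: hle => hkx hle.
set k := first_adj s in hkx hle *.
have hx := restricted_head hr.
have hfound : nth 0 s k.-1 = k.+1 by apply: fa_found; rewrite hs; lia.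
have hadj : adjk k s by apply: (match_adj (n := n.+1)) => //; case/andP: hd.
have /andP [/andP [hj0 hjx] _] := hjr.
case: (leqP j k.+1) => hjk.
- rewrite rseq_auxS fa_lk1 //; try lia.
  rewrite rem_lk //; try lia.
  split => //.
  by rewrite rseq_auxS -/k /rs_le /= leqnn hkx.
- rewrite rseq_auxS fa_lk2 //; try lia.
  rewrite rem_comm //; try lia.
  set s2 := remove_arc k s in hle *.
  have k0 : 0 < k by [].
  have hs2 : size s2 = 2 * n by rewrite size_rem; case: hadj; lia.
  have hd2 : is_diagram n s2.
    apply: (diag_lk_inv (k := k)) => //; first lia.
    by rewrite lk_rem.
  have hr' : restricted r' by move: hr; case: (r') => // y r'' /= /andP [].
  have hjr' : restricted (j - 2 :: r').
    move: hr; case: (r') => [/= /eqP e|y r'' /= /andP [/andP [_ hxy] hr2]]; first lia.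
    apply/andP; split => //; apply/andP; split; lia.
  have [IH1 IH2] := IH s2 r' (j - 2) hd2 hr' hsr hle hjr'.
  rewrite rseq_auxS /rs_le /= -/(rs_le _ _) in IH1; case/andP: IH1 => h1 h2.
  split.
    rewrite /rs_le /= -/(rs_le _ _) -/k; apply/andP; split; first lia.
    rewrite h2 andbT; lia.
  rewrite sumn_cons oddD IH2 [rseq_aux n.+1 s]rseq_auxS -/k -/s2 sumn_cons !oddD.
  have -> : odd (j - 2) = odd j.
    have [J ->] : exists J, j = J.+2 by exists (j - 2); lia.
    have -> : J.+2 - 2 = J by lia.
    by rewrite /= ?negbK.
  by case: (odd j); case: (odd k); case: (odd _).
Qed.

Import Order.TTheory GRing.Theory Num.Theory.
Section Alg.
Local Open Scope ring_scope.
Local Notation "x %:F" := (@FracField.tofrac _ x).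

Definition pos (x : Qq) : Prop :=
  exists p s : {poly rat}, 0 < p.[2] /\ 0 < s.[2] /\ x = p%:F / s%:F.

Lemma poly_neq0 (p : {poly rat}) : 0 < p.[2] -> p != 0.
Proof. by apply: contraTneq => ->; rewrite horner0 ltxx. Qed.

Lemma frac_neq0 (p : {poly rat}) : 0 < p.[2] -> p%:F != 0 :> Qq.
Proof. by move=> h; rewrite tofrac_eq0 poly_neq0. Qed.

Lemma pos_neq0 x : pos x -> x != 0.
Proof.
case=> [p [s [hp [hs ->]]]].
by rewrite mulf_neq0 ?invr_eq0 ?frac_neq0.
Qed.

Lemma pos_add x y : pos x -> pos y -> pos (x + y).
Proof.
case=> [p [s [hp [hs ->]]]] [p' [s' [hp' [hs' ->]]]].
exists (p * s' + p' * s), (s * s'); split; last split.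
- by rewrite hornerD !hornerM addr_gt0 ?mulr_gt0.
- by rewrite hornerM mulr_gt0.
- have h1 := frac_neq0 hs; have h2 := frac_neq0 hs'.
  by rewrite addf_div // tofracD !tofracM.
Qed.

Lemma pos_mul x y : pos x -> pos y -> pos (x * y).
Proof.
case=> [p [s [hp [hs ->]]]] [p' [s' [hp' [hs' ->]]]].
exists (p * p'), (s * s'); split; last split.
- by rewrite hornerM mulr_gt0.
- by rewrite hornerM mulr_gt0.
- have h1 := frac_neq0 hs; have h2 := frac_neq0 hs'.
  by rewrite mulf_div !tofracM.
Qed.

Lemma DeltaSS k : Delta k.+2 = 'X * Delta k.+1 - Delta k.
Proof. by []. Qed.

Lemma Delta2 k : (Delta k).[2] = k.+1%:R :> rat.
Proof.
elim: k {-2}k (leqnn k) => [|m IH] k hk.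
  by move: hk; rewrite leqn0 => /eqP ->; rewrite /= hornerC.
case: k hk => [|[|k]] hk; first by rewrite /= hornerC.
  by rewrite /= hornerX.
rewrite DeltaSS hornerD hornerN hornerM hornerX !IH //; last by lia.
have e i : (i.+1)%:R = i%:R + 1 :> rat by rewrite -addn1 natrD.
rewrite !e; ring.
Qed.

Lemma ratD_pos m : (2 <= m)%N -> pos (ratD m).
Proof.
move=> hm; exists (Delta (m - 2)), (Delta (m - 1)); split; last split; last exact: erefl.
- by rewrite Delta2 ltr0n.
- by rewrite Delta2 ltr0n.
Qed.

Definition sp (b : bool) (x : Qq) := pos (if b then - x else x).

Lemma sp_neq0 b x : sp b x -> x != 0.
Proof. rewrite /sp; case: b => h; last exact: pos_neq0.
by have := pos_neq0 h; rewrite oppr_eq0. Qed.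

Lemma sp_add b x y : sp b x -> (y = 0 \/ sp b y) -> sp b (x + y).
Proof.
move=> hx [->|hy]; first by rewrite addr0.
move: hx hy; rewrite /sp; case: b => hx hy; last exact: pos_add.
by rewrite opprD; apply: pos_add.
Qed.

Lemma sp_negmul b c x : pos c -> sp b x -> sp (~~ b) (- (c * x)).
Proof.
rewrite /sp; case: b => hc hx; rewrite ?negbK.
  by rewrite -mulrN; apply: pos_mul.
by rewrite opprK; apply: pos_mul.
Qed.

End Alg.

Lemma coeff_nil d : coeff [::] d = 0%R.
Proof. by rewrite /coeff big_nil. Qed.

Lemma coeff_cons t v d :
  coeff (t :: v) d = ((if t.2 == d then t.1 else 0) + coeff v d)%R.
Proof. by rewrite /coeff big_cons; case: ifP; rewrite ?add0r. Qed.

Lemma coeff_cat v w d : coeff (v ++ w) d = (coeff v d + coeff w d)%R.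
Proof. by rewrite /coeff big_cat. Qed.

Lemma coeff_scale c v d : coeff (vscale c v) d = (c * coeff v d)%R.
Proof.
elim: v => [|t v IH]; first by rewrite /vscale /= !coeff_nil mulr0.
rewrite /vscale /= -/(vscale c v) !coeff_cons IH mulrDr /=.
by case: ifP; rewrite ?mulr0.
Qed.

Lemma coeff_vl k v d : 0 < k -> all (fun t => k.-1 <= size t.2) v ->
  coeff (vl k v) d =
  if lk k (remove_arc k d) == d then coeff v (remove_arc k d) else 0%R.
Proof.
move=> k0; elim: v => [|t v IH] /=.
  by rewrite !coeff_nil; case: ifP.
case/andP => ht hv; rewrite -/(vl k v) !coeff_cons IH //=.
have e : (lk k t.2 == d) = (t.2 == remove_arc k d) && (lk k (remove_arc k d) == d).
  apply/eqP/andP => [<-|[/eqP -> /eqP //]].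
  have hk : k <= (size t.2).+1 by case: (k) k0 ht.
  by rewrite rem_lk //; split.
rewrite e; case: (lk k (remove_arc k d) == d); rewrite ?andbT ?andbF ?addr0 //.
Qed.

Lemma eprime1 r : eprime (1 :: r) = vl 1 (eprime r).
Proof. by []. Qed.

Lemma eprimeSS m r : eprime (m.+2 :: r) =
  vsub (vl m.+2 (eprime r)) (vscale (ratD m.+2) (eprime (m.+1 :: r))).
Proof. by []. Qed.

Lemma all_vscale N c v : all (fun t => size t.2 == N) (vscale c v) =
  all (fun t : Qq * seq nat => size t.2 == N) v.
Proof. by elim: v => //= t v ->. Qed.

Lemma eprime_size a : all (fun t => size t.2 == 2 * size a) (eprime a).
Proof.
elim: a => [|m r IH]; first by [].
have e : 2 * size (m :: r) = (2 * size r).+2 by rewrite /=; lia.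
rewrite e; clear e.
elim: m => [|[|m] IHm]; first by [].
  by rewrite eprime1 /vl all_map; apply: sub_all IH => t /eqP ht; rewrite /preim /= size_lk ht.
rewrite eprimeSS /vsub all_cat; apply/andP; split.
  by rewrite /vl all_map; apply: sub_all IH => t /eqP ht; rewrite /preim /= size_lk ht.
by rewrite !all_vscale.
Qed.

Definition Pr (a d : seq nat) : Prop :=
  is_diagram (size a) d ->
  if rs_le (rseq_aux (size a) d) a
  then sp (odd (sumn a + sumn (rseq_aux (size a) d))) (coeff (eprime a) d)
  else coeff (eprime a) d = 0%R.

Lemma restricted_pos m r : restricted (m :: r) -> 0 < m.
Proof. by case: r => [/= /eqP ->|y r /= /andP [/andP [] ]]. Qed.

Lemma restricted_tail m r : restricted (m :: r) -> restricted r.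
Proof. by case: r => [//|y r /= /andP []]. Qed.

Lemma restrictedCC x y r :
  restricted (x :: y :: r) = (0 < x <= y.+1) && restricted (y :: r).
Proof. by []. Qed.

Lemma rs_le_cons a b c e : rs_le (a :: b) (c :: e) = (a <= c) && rs_le b e.
Proof. by []. Qed.

Lemma hterm r m d : restricted (m :: r) -> (forall d', Pr r d') ->
  is_diagram (size r).+1 d ->
  [/\ ~~ rs_le (rseq_aux (size r).+1 d) (m :: r) -> coeff (vl m (eprime r)) d = 0%R,
      rs_le (rseq_aux (size r).+1 d) (m :: r) -> coeff (vl m (eprime r)) d = 0%R \/
        sp (odd (sumn (m :: r) + sumn (rseq_aux (size r).+1 d))) (coeff (vl m (eprime r)) d)
    & rs_le (rseq_aux (size r).+1 d) (m :: r) -> first_adj d = m ->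
        sp (odd (sumn (m :: r) + sumn (rseq_aux (size r).+1 d))) (coeff (vl m (eprime r)) d)].
Proof.
move=> hr IH hd.
set n := size r.
have hm := restricted_head hr.
have m0 := restricted_pos hr.
have hrr := restricted_tail hr.
have hsd := diag_size hd.
have hall : all (fun t => m.-1 <= size t.2) (eprime r).
  by apply: sub_all (eprime_size r) => t /eqP ->; rewrite -/n; lia.
rewrite coeff_vl //.
set d' := remove_arc m d.
case: eqP => hc.
- have hs' : size d' = 2 * n by move: hsd; rewrite -hc size_lk; lia.
  have hd' : is_diagram n d'.
    by apply: (diag_lk_inv (k := m)) => //; [lia | rewrite hc].
  have := IH d' hd'; rewrite -/n; case: ifP => hle' hf.
  + have [L1 L2] := rseq_lk hd' hrr erefl hle' hr.
    rewrite hc in L1 L2.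
    have hp : odd (sumn r + sumn (rseq_aux n d')) =
              odd (sumn (m :: r) + sumn (rseq_aux n.+1 d)).
      rewrite [in RHS]oddD L2 (sumn_cons m r) !oddD.
      by case: (odd m); case: (odd (sumn r)); case: (odd (sumn _)).
    rewrite hp in hf.
    by split => //; [rewrite L1 | right].
  + split => //; first by left.
    move=> hle hfa; exfalso; move: hle.
    rewrite rseq_auxS hfa -/d' /rs_le /= -/(rs_le _ _) hle'.
    by rewrite andbF.
- split => //; first by left.
  move=> hle hfa; exfalso; apply: hc.
  have hfound : nth 0 d m.-1 = m.+1.
    by rewrite -hfa; apply: fa_found; rewrite hfa hsd; lia.
  apply: lk_rem; apply: (match_adj (n := n.+1)) => //.
  by case/andP: hd.
Qed.

Lemma sp_eq b b' x : b = b' -> sp b x -> sp b' x.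
Proof. by move=> ->. Qed.

Lemma pos1 : pos 1.
Proof.
exists 1%R, 1%R; split; first by rewrite hornerC.
split; first by rewrite hornerC.
by rewrite rmorph1 divr1.
Qed.

Lemma main_ind a : restricted a -> forall d, Pr a d.
Proof.
elim: a => [|m r IH] hr d.
  rewrite /Pr /= => hd; have := diag_size hd; case: d hd => // _ _.
  by rewrite /rs_le /= /coeff big_cons big_nil /= addr0; apply: pos1.
have hrr := restricted_tail hr.
have IHr := IH hrr.
have e : forall x, size (x :: r) = (size r).+1 by [].
elim: m hr d => [|[|m'] IHm] hr d; first by have := restricted_pos hr.
- rewrite /Pr e eprime1 => hd.
  have [Ha Hb Hc] := hterm hr IHr hd.
  case: ifP => hle; last by apply: Ha; rewrite hle.
  apply: Hc => //.
  move: hle; rewrite rseq_auxS /rs_le /= => /andP [h1 _].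
  have := fa_pos d; lia.
- have hr' : restricted (m'.+1 :: r).
    move: hr; case: (r) => [//|y r''].
    rewrite !restrictedCC => /andP [h1 h2]; rewrite h2 andbT; lia.
  have IH1 := IHm hr' d.
  rewrite /Pr e in IH1 *; move=> hd; have {}IH1 := IH1 hd.
  have [Ha Hb Hc] := hterm hr IHr hd.
  rewrite eprimeSS /vsub coeff_cat !coeff_scale mulN1r.
  move: Ha Hb Hc IH1.
  rewrite rseq_auxS !rs_le_cons.
  set fa := first_adj d.
  set X := rs_le _ r.
  case hX : X; rewrite ?andbT ?andbF => Ha Hb Hc IH1; last first.
    have Ha0 := Ha isT.
    by rewrite Ha0 IH1 mulr0 oppr0 addr0.
  have : (fa <= m'.+1) \/ (fa = m'.+2) \/ (m'.+2 < fa) by lia.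
  case=> [hfa|[hfa|hfa]].
  + have h1 : fa <= m'.+2 by lia.
    rewrite h1 /=; rewrite hfa in IH1.
    rewrite addrC; apply: sp_add.
      by apply: sp_eq (sp_negmul (ratD_pos _) IH1).
    by case: (Hb h1) => [->|h]; [left | right].
  + have h1 : fa <= m'.+2 by lia.
    have h2 : fa <= m'.+1 = false by apply/negbTE; lia.
    rewrite h1; rewrite h2 in IH1.
    rewrite IH1 mulr0 oppr0 addr0; apply: Hc => //.
  + have h1 : fa <= m'.+2 = false by apply/negbTE; lia.
    have h2 : fa <= m'.+1 = false by apply/negbTE; lia.
    rewrite h1; rewrite h2 in IH1.
    have Ha0 := Ha (negbT h1).
    by rewrite Ha0 IH1 mulr0 oppr0 addr0.
Qed.

Theorem mainTheorem10 (n : nat) (alpha : seq nat) :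
  (1 <= n)%N -> size alpha = n -> restricted alpha ->
  forall d : seq nat, is_diagram n d ->
    (coeff (eprime alpha) d != 0%R) = rs_le (rseq d) alpha.
Proof.
move=> _ hs hr d hd.
have hP := @main_ind alpha hr d; rewrite /Pr hs in hP.
have {}hP := hP hd.
have -> : rseq d = rseq_aux n d by rewrite /rseq (diag_size hd) mul2n doubleK.
case: ifP hP => _ hP; first exact: sp_neq0 hP.
by rewrite hP eqxx.
Qed.
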